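(* Let $a$ be a regular scale factor with $\dot a(0^+)<\infty$, extended evenly to negative arguments, and fix $\tau>0$. Then the function $t_0\mapsto f(\tau,t_0)$ is continuously differentiable on $\{t_0: -\tau<t_0<\tau,\ t_0\neq0\}$, and \[ \partial_{t_0}f(\tau,t_0)=-\frac{a(t_0)\,\dot a(|t_0|)}{\sqrt{a^2(\tau)-a^2(t_0)}}\int_{|t_0|}^{\tau}\frac{\ddot a(t)}{\dot a(t)^2}\frac{dt}{\sqrt{a^2(\tau)-a^2(t)}}. \]
   Context: A function $a:[0,\infty)\to[0,\infty)$ is a regular scale factor if: (a) $a(0)=0$; (b) $a$ is increasing and continuous on $[0,\infty)$, twice continuously differentiable on $(0,\infty)$, with an inverse function on $[0,\infty)$; (c) $\frac{a(t)\ddot a(t)}{\dot a(t)^2}\le1$ for all $t>0$ (presupposing $\dot a(t)\ne0$). $\dot a(0^+)=\lim_{t\to0^+}\dot a(t)$. Extend $a$ by $a(-t)=a(t)$. For $0\le t_0<\tau$, \[ f(\tau,t_0)=\int_{t_0}^{\tau}\frac{\ddot a(t)}{\dot a(t)^2}\left(\frac{\sqrt{a^2(\tau)-a^2(t_0)}}{\sqrt{a^2(\tau)-a^2(t)}}-1\right)dt, \] and for $-\tau<t_0<0$, $f(\tau,t_0)=2f(\tau,0)-f(\tau,-t_0)$. *)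

(* Defs.v *)
From HB Require Import structures.
From mathcomp Require Import all_boot all_order all_algebra.
From mathcomp Require Import all_classical all_reals all_analysis.
Set Implicit Arguments. Unset Strict Implicit. Unset Printing Implicit Defensive.
Import Order.TTheory GRing.Theory Num.Theory.
Import numFieldNormedType.Exports.
Local Open Scope classical_set_scope.
Local Open Scope ring_scope.

(* [a : R -> R] is the scale factor; only its
   restriction to [0, +oo) matters for the regularity conditions.  The even
   extension a(-t) = a(t) is imposed as a separate hypothesis in the theorem. *)

Record regular_scale_factor {R : realType} (a : R -> R) : Prop := {
  rsf_a0 : a 0 = 0;
  rsf_ge0 : forall t, 0 <= t -> 0 <= a t;
  rsf_incr : forall s t, 0 <= s -> s < t -> a s < a t;
  (* the inverse function is defined on all of [0,oo): a is onto [0,oo) *)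
  rsf_onto : forall y, 0 <= y -> exists t, 0 <= t /\ a t = y;
  rsf_cont : {within `[0, +oo[, continuous a};
  rsf_d1 : forall t, 0 < t -> derivable a t 1;
  rsf_d2 : forall t, 0 < t -> derivable (derive1 a) t 1;
  rsf_d2cont : forall t, 0 < t -> {for t, continuous (derive1 (derive1 a))};
  (* condition (c), presupposing adot t <> 0 *)
  rsf_adot_neq0 : forall t, 0 < t -> derive1 a t != 0;
  rsf_c : forall t, 0 < t -> a t * derive1 (derive1 a) t / (derive1 a t) ^+ 2 <= 1 }.

Definition adot0_finite {R : realType} (a : R -> R) : Prop :=
  exists L : R, derive1 a x @[x --> 0^'+] --> L.

Definition f_pos {R : realType} (a : R -> R) (tau t0 : R) : R :=
  Rintegral (@lebesgue_measure R) `]t0, tau[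
    (fun t => derive1 (derive1 a) t / (derive1 a t) ^+ 2 *
       (Num.sqrt (a tau ^+ 2 - a t0 ^+ 2) / Num.sqrt (a tau ^+ 2 - a t ^+ 2) - 1)).

Definition f_sf {R : realType} (a : R -> R) (tau t0 : R) : R :=
  if 0 <= t0 then f_pos a tau t0 else 2 * f_pos a tau 0 - f_pos a tau (- t0).

(* Main.v *)
Require Import Defs.
From HB Require Import structures.
From mathcomp Require Import all_boot all_order all_algebra.
From mathcomp Require Import all_classical all_reals all_analysis.
From mathcomp Require Import measurable_realfun ring lra.
Import Order.TTheory GRing.Theory Num.Theory.
Import numFieldNormedType.Exports.
Local Open Scope classical_set_scope.
Local Open Scope ring_scope.
Set Implicit Arguments. Unset Strict Implicit.


Lemma rsf_ad_gt0 (R : realType) (a : R -> R) : regular_scale_factor a ->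
  forall t, 0 < t -> 0 < derive1 a t.
Proof.
move=> H t t0; rewrite lt_neqAle eq_sym rsf_adot_neq0 //=.
apply: (@incr_derive1_ge0_itvy _ _ true 0).
- move=> x; rewrite inE /= in_itv /= andbT => x0; exact: rsf_d1.
- move=> x y x0 y0 xy; move: x0 y0; rewrite !in_itv /= !andbT => x0 y0; exact: rsf_incr.
- by rewrite in_itv /= t0.
Qed.

Lemma rsf_a_gt0 (R : realType) (a : R -> R) : regular_scale_factor a ->
  forall t, 0 < t -> 0 < a t.
Proof. by move=> H t t0; rewrite -(rsf_a0 H); apply: rsf_incr. Qed.

Lemma rsf_a_cont (R : realType) (a : R -> R) : regular_scale_factor a ->
  forall t, 0 < t -> {for t, continuous a}.
Proof.
move=> H t t0; apply: differentiable_continuous; apply/derivable1_diffP.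
exact: rsf_d1.
Qed.

Lemma rsf_ad_cont (R : realType) (a : R -> R) : regular_scale_factor a ->
  forall t, 0 < t -> {for t, continuous (derive1 a)}.
Proof.
move=> H t t0; apply: differentiable_continuous; apply/derivable1_diffP.
exact: rsf_d2.
Qed.

Lemma rsf_A_gt0 (R : realType) (a : R -> R) (tau : R) : regular_scale_factor a ->
  forall t, 0 <= t < tau -> 0 < a tau ^+ 2 - a t ^+ 2.
Proof.
move=> H t /andP[t0 ttau]; rewrite subr_gt0.
have := rsf_incr H t0 ttau; have := rsf_ge0 H t0 => h1 h2.
by rewrite ltrXn2r.
Qed.

Definition Pf {R : realType} (a : R -> R) (tau x : R) : R := Num.sqrt (a tau ^+ 2 - a x ^+ 2).

Lemma Pf_derive (R : realType) (a : R -> R) (tau : R) : regular_scale_factor a ->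
  forall t, 0 < t < tau ->
  is_derive t 1 (Pf a tau) (- (a t * derive1 a t / Pf a tau t)).
Proof.
move=> H t /andP[t0 ttau].
have A0 : 0 < a tau ^+ 2 - a t ^+ 2 by apply: rsf_A_gt0; rewrite ?ltW // t0.
have da : is_derive t 1 a (derive1 a t).
  by rewrite derive1E; apply: derivableP; apply: rsf_d1.
have dg : is_derive t 1 (fun x => a tau ^+ 2 - a x ^+ 2) (- (2 * a t * derive1 a t)).
  have -> : (fun x => a tau ^+ 2 - a x ^+ 2) = cst (a tau ^+ 2) - a ^+ 2.
    by apply/funext => x /=.
  have := is_deriveB (is_derive_cst (a tau ^+ 2) t 1) (is_deriveX 2 da).
  move=> D; apply: (is_derive_eq D).
  by rewrite sub0r expr1.
have D := @is_derive1_comp _ Num.sqrt (fun x => a tau ^+ 2 - a x ^+ 2) t _ _ (is_derive1_sqrt A0) dg.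
rewrite /Pf; apply: (is_derive_eq D).
have P0 : 0 < Num.sqrt (a tau ^+ 2 - a t ^+ 2) by rewrite sqrtr_gt0.
rewrite mulrN; congr (- _); field.
by rewrite lt0r_neq0.
Qed.

Lemma Pf_cont (R : realType) (a : R -> R) (tau : R) : regular_scale_factor a ->
  forall t, 0 < t -> {for t, continuous (Pf a tau)}.
Proof.
move=> H t t0.
apply: (@continuous_comp _ _ _ (fun x => a tau ^+ 2 - a x ^+ 2) Num.sqrt);
  last exact: sqrt_continuous.
apply: (@continuousB _ _ _ (cst (a tau ^+ 2)) (fun x => a x ^+ 2)).
  exact: cst_continuous.
apply: (@continuousM _ _ a a); exact: rsf_a_cont.
Qed.

Definition gf {R : realType} (a : R -> R) (x : R) : R :=
  derive1 (derive1 a) x / (derive1 a x) ^+ 2.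
Definition hf {R : realType} (a : R -> R) (tau x : R) : R :=
  gf a x / Pf a tau x.

Lemma gf_cont (R : realType) (a : R -> R) : regular_scale_factor a ->
  forall t, 0 < t -> {for t, continuous (gf a)}.
Proof.
move=> H t t0.
apply: (@continuousM _ _ (derive1 (derive1 a)) (fun x => (derive1 a x ^+ 2)^-1)).
  exact: rsf_d2cont.
apply: continuousV.
  by rewrite expf_neq0 // rsf_adot_neq0.
apply: (@continuousM _ _ (derive1 a) (derive1 a)); exact: rsf_ad_cont.
Qed.

Lemma Pf_gt0 (R : realType) (a : R -> R) (tau : R) : regular_scale_factor a ->
  forall t, 0 <= t < tau -> 0 < Pf a tau t.
Proof. by move=> H t tt; rewrite /Pf sqrtr_gt0; apply: rsf_A_gt0. Qed.

Lemma hf_cont (R : realType) (a : R -> R) (tau : R) : regular_scale_factor a ->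
  forall t, 0 < t < tau -> {for t, continuous (hf a tau)}.
Proof.
move=> H t /andP[t0 tt].
apply: (@continuousM _ _ (gf a) (fun x => (Pf a tau x)^-1)).
  exact: gf_cont.
apply: continuousV.
  by rewrite gt_eqF // Pf_gt0 // ltW.
exact: Pf_cont.
Qed.

Lemma is_derive_cont (R : realType) (f : R -> R) (x df : R) :
  is_derive x 1 f df -> {for x, continuous f}.
Proof.
by move=> [d _]; apply: differentiable_continuous; apply/derivable1_diffP.
Qed.

Definition vf {R : realType} (a : R -> R) (tau x : R) : R :=
  a x * derive1 a x / Pf a tau x.

Lemma vf_cont (R : realType) (a : R -> R) (tau : R) : regular_scale_factor a ->
  forall t, 0 < t < tau -> {for t, continuous (vf a tau)}.
Proof.
move=> H t /andP[t0 tt].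
apply: (@continuousM _ _ (fun x => a x * derive1 a x) (fun x => (Pf a tau x)^-1)).
  apply: (@continuousM _ _ a (derive1 a)); [exact: rsf_a_cont|exact: rsf_ad_cont].
apply: continuousV.
  by rewrite gt_eqF // Pf_gt0 // ltW.
exact: Pf_cont.
Qed.

Lemma q_bound (R : realType) (a : R -> R) (tau : R) : regular_scale_factor a ->
  forall c, 0 < c < tau -> exists M : R, 0 <= M /\
  forall s, c < s < tau ->
  (\int[@lebesgue_measure R]_(x in `[c, s]) ((Pf a tau x)^-1)%:E <= (M * Pf a tau c)%:E)%E.
Proof.
move=> H c /andP[c0 ctau].
pose k x := (a x * derive1 a x)^-1.
have kcont : {within `[c, tau], continuous k}.
  apply: continuous_in_subspaceT => x; rewrite inE /= in_itv /= => /andP[cx _].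
  have x0 : 0 < x by exact: lt_le_trans cx.
  apply: (@continuousV _ _ (fun x => a x * derive1 a x)).
    by apply: mulf_neq0; apply: lt0r_neq0; [exact: rsf_a_gt0|exact: rsf_ad_gt0].
  apply: (@continuousM _ _ a (derive1 a)); [exact: rsf_a_cont|exact: rsf_ad_cont].
have [x1 x1in kmax] := EVT_max (ltW ctau) kcont.
exists (k x1).
have kpos x : 0 < x -> 0 < k x.
  by move=> x0; rewrite /k invr_gt0 mulr_gt0 //; [exact: rsf_a_gt0|exact: rsf_ad_gt0].
have x10 : 0 < x1.
  by move: x1in; rewrite in_itv /= => /andP[+ _]; exact: lt_le_trans.
split; first exact/ltW/kpos.
move=> s /andP[cs stau].
have c0' : forall x, c <= x -> 0 < x by move=> x; exact: lt_le_trans.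
have vc : {within `[c, s], continuous (fun x => k x1 * vf a tau x)}.
  apply: continuous_in_subspaceT => x; rewrite inE /= in_itv /= => /andP[cx xs].
  apply: (@continuousM _ _ (cst (k x1)) (vf a tau)); first exact: cst_continuous.
  by apply: vf_cont => //; rewrite c0' //= (le_lt_trans xs).
have qc : {within `[c, s], continuous (fun x => (Pf a tau x)^-1)}.
  apply: continuous_in_subspaceT => x; rewrite inE /= in_itv /= => /andP[cx xs].
  apply: continuousV.
    by rewrite gt_eqF // Pf_gt0 // ?ltW ?c0' //= (le_lt_trans xs).
  exact/Pf_cont/c0'.
have dP x : c <= x <= s -> is_derive x 1 (- (k x1 \*: Pf a tau))
    (- (k x1 *: - (a x * derive1 a x / Pf a tau x))).
  move=> /andP[cx xs]; apply: is_deriveN; apply: is_deriveZ; apply: Pf_derive => //.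
  by rewrite c0' //= (le_lt_trans xs).
have FTC := @continuous_FTC2 R _ (- (k x1 \*: Pf a tau)) c s cs vc.
have k10 : 0 <= k x1 by exact/ltW/kpos.
apply: (@le_trans _ _ (\int[@lebesgue_measure R]_(x in `[c, s]) ((k x1 * vf a tau x)%:E))%E).
  apply: ge0_le_integral => //.
  - by move=> x _; rewrite lee_fin invr_ge0 sqrtr_ge0.
  - exact: (measurable_int _ (continuous_compact_integrable (@segment_compact _ c s) qc)).
  - exact: (measurable_int _ (continuous_compact_integrable (@segment_compact _ c s) vc)).
  move=> x; rewrite /= in_itv /= => /andP[cx xs]; rewrite lee_fin.
  have x0 := c0' _ cx.
  have xt : x < tau by exact: le_lt_trans xs stau.
  have Px : 0 < Pf a tau x by rewrite Pf_gt0 // ltW.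
  have ax := rsf_a_gt0 H x0; have adx := rsf_ad_gt0 H x0.
  have -> : (Pf a tau x)^-1 = k x * vf a tau x.
    by rewrite /k /vf; field; rewrite !gt_eqF.
  apply: ler_wpM2r; first by rewrite /vf divr_ge0 // ?mulr_ge0 // ltW.
  by apply: kmax; rewrite in_itv /= cx (ltW xt).
rewrite FTC; last 2 first.
- split.
  + by move=> x; rewrite in_itv /= => /andP[cx xs]; case: (dP x); rewrite ?ltW ?cx ?xs.
  + apply: cvg_at_right_filter; apply: (is_derive_cont (dP c _)).
    by rewrite lexx ltW.
  + apply: cvg_at_left_filter; apply: (is_derive_cont (dP s _)).
    by rewrite lexx ltW.
- move=> x; rewrite in_itv /= => /andP[cx xs].
  rewrite derive1E; have [_ ->] := dP x ltac:(by rewrite !ltW).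
  by rewrite /vf scalerN opprK.
rewrite -EFinB lee_fin /=.
have h1 : 0 <= Pf a tau s by rewrite sqrtr_ge0.
have h2 : 0 <= k x1 * Pf a tau s by rewrite mulr_ge0.
have -> : (- (k x1 \*: Pf a tau)) s = - (k x1 * Pf a tau s) by [].
have -> : (- (k x1 \*: Pf a tau)) c = - (k x1 * Pf a tau c) by [].
lra.
Qed.

Lemma q_integrable (R : realType) (a : R -> R) (tau : R) : regular_scale_factor a ->
  forall c, 0 < c < tau ->
  (@lebesgue_measure R).-integrable `]c, tau[ (EFin \o (fun x => (Pf a tau x)^-1)).
Proof.
move=> H c /andP[c0 ctau].
have hc : 0 < c < tau by apply/andP.
have [M [M0 Mb]] := q_bound H hc.
set q := fun x => (Pf a tau x)^-1.
have q0 x : 0 <= q x by rewrite /q invr_ge0 sqrtr_ge0.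
have mq : measurable_fun `]c, tau[ q.
  apply: open_continuous_measurable_fun; first exact: interval_open.
  move=> x; rewrite inE /= in_itv /= => /andP[cx xt].
  apply: continuousV.
    by rewrite gt_eqF // Pf_gt0 // (ltW (lt_trans c0 cx)) xt.
  exact: (Pf_cont H (lt_trans c0 cx)).
pose s (n : nat) := tau - (tau - c) / n.+2%:R.
have sin n : c < s n < tau.
  have n2 : 0 < n.+2%:R :> R by rewrite ltr0n.
  have n21 : 1 < n.+2%:R :> R by rewrite ltr1n.
  have hd : (tau - c) / n.+2%:R < tau - c by rewrite ltr_pdivrMr // ltr_pMr ?subr_gt0.
  have hd0 : 0 < (tau - c) / n.+2%:R by rewrite divr_gt0 // subr_gt0.
  rewrite /s; move: hd hd0; set dd := (tau - c) / _ => hd hd0.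
  apply/andP; split; lra.
have sle n m : (n <= m)%N -> s n <= s m.
  move=> nm; have hv : (m.+2%:R)^-1 <= (n.+2%:R)^-1 :> R.
    by rewrite lef_pV2 ?posrE ?ltr0n // ler_nat ltnS ltnS.
  have tc : 0 <= tau - c by rewrite subr_ge0 ltW.
  by rewrite /s lerD2l lerN2 ler_wpM2l.
have qcont x : 0 < x < tau -> {for x, continuous q}.
  move=> /andP[x0 xt]; apply: continuousV.
    by rewrite gt_eqF // Pf_gt0 // ltW.
  exact: Pf_cont.
pose g' n := (EFin \o q) \_ `[c, s n].
have g'0 n x : (0 <= g' n x)%E.
  by rewrite /g' patchE; case: ifP => _; rewrite ?lee_fin ?q0.
have mg' n : measurable_fun setT (g' n).
  apply/(measurable_restrictT _ _).1 => //.
  apply: (measurable_int _ (continuous_compact_integrable (@segment_compact _ c (s n)) _)).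
  apply: continuous_in_subspaceT => x; rewrite inE /= in_itv /= => /andP[cx xs].
  apply: qcont; rewrite (lt_le_trans c0 cx) /=.
  by have /andP[_ ?] := sin n; exact: le_lt_trans xs _.
have nd : forall x, `]c, tau[%classic x -> {homo g'^~ x : n m / (n <= m)%N >-> (n <= m)%E}.
  move=> x _ n m nm; rewrite /g' !patchE.
  case: ifPn => xn; last by case: ifP => _; rewrite ?lee_fin ?q0.
  rewrite ifT //; move: xn; rewrite !inE /= !in_itv /= => /andP[-> xn] /=.
  exact: le_trans xn (sle _ _ nm).
have MCT := monotone_convergence (@lebesgue_measure R) (measurable_itv `]c, tau[)
  (fun n => measurable_funS measurableT (@subsetT _ _) (mg' n)) (fun n x _ => g'0 n x) nd.
have lim_g : forall x, `]c, tau[%classic x -> limn (g'^~ x) = (q x)%:E.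
  move=> x; rewrite /= in_itv /= => /andP[cx xt].
  apply/cvg_lim => //; apply: cvg_near_cst.
  have tx : 0 < tau - x by rewrite subr_gt0.
  near=> n.
  have hn : (tau - c) / (tau - x) <= n%:R.
    by near: n; exact: nbhs_infty_ger.
  rewrite /g' patchE ifT //= inE /= in_itv /= (ltW cx) /= /s.
  have : (tau - c) / n.+2%:R <= tau - x.
    rewrite ler_pdivrMr ?ltr0n //.
    rewrite ler_pdivrMr // in hn.
    have : (n%:R : R) <= n.+2%:R by rewrite ler_nat ltnW // ltnS leqnSn.
    nra.
  set dd := (tau - c) / _; lra.
apply/integrableP; split; first exact/measurable_EFinP.
have -> : (\int[@lebesgue_measure R]_(x in `]c, tau[) `|(EFin \o q) x|
   = \int[@lebesgue_measure R]_(x in `]c, tau[) limn (g'^~ x))%E.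
  apply: eq_integral => x; rewrite inE => xD.
  by rewrite lim_g //= ger0_norm.
rewrite MCT; apply: le_lt_trans (ltry (M * Pf a tau c)).
apply: lime_le.
  apply: ereal_nondecreasing_is_cvgn => n m nm.
  apply: ge0_le_integral; first exact: measurable_itv.
  - by move=> x _; exact: g'0.
  - exact: measurable_funS measurableT (@subsetT _ _) (mg' n).
  - exact: measurable_funS measurableT (@subsetT _ _) (mg' m).
  - by move=> x xD; exact: nd.
apply: nearW => n.
apply: le_trans (ge0_subset_integral (@lebesgue_measure R) (measurable_itv `]c, tau[)
   measurableT (mg' n) (fun x _ => g'0 n x) (@subsetT _ _)) _.
rewrite /g' -integral_mkcond.
have /andP[? ?] := sin n.
by apply: Mb; apply/andP.
Unshelve. all: by end_near.
Qed.


Lemma g_integrable (R : realType) (a : R -> R) (tau : R) : regular_scale_factor a ->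
  forall c, 0 < c < tau ->
  (@lebesgue_measure R).-integrable `]c, tau[ (EFin \o gf a).
Proof.
move=> H c /andP[c0 ctau].
have gc : {within `[c, tau], continuous (gf a)}.
  apply: continuous_in_subspaceT => x; rewrite inE /= in_itv /= => /andP[cx _].
  exact: (gf_cont H (lt_le_trans c0 cx)).
have i := continuous_compact_integrable (@segment_compact _ c tau) gc.
apply: (integrableS _ _ _ i) => //.
exact: subset_itv_oo_cc.
Qed.

Lemma h_integrable (R : realType) (a : R -> R) (tau : R) : regular_scale_factor a ->
  forall c, 0 < c < tau ->
  (@lebesgue_measure R).-integrable `]c, tau[ (EFin \o hf a tau).
Proof.
move=> H c /andP[c0 ctau].
have gc : {within `[c, tau], continuous (fun x => `|gf a x|)}.
  apply: continuous_in_subspaceT => x; rewrite inE /= in_itv /= => /andP[cx _].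
  apply: (@continuous_comp _ _ _ (gf a) Num.norm); last exact: norm_continuous.
  exact: (gf_cont H (lt_le_trans c0 cx)).
have [x1 x1in gmax] := EVT_max (ltW ctau) gc.
have hc : 0 < c < tau by apply/andP.
have qi := q_integrable H hc.
have qi2 : (@lebesgue_measure R).-integrable `]c, tau[
    (fun x => (`|gf a x1|)%:E * (EFin \o (fun y => ((Pf a tau y)^-1)%R)) x)%E.
  by apply: integrableZl.
apply: (le_integrable _ _ _ qi2) => //.
  apply/measurable_EFinP.
  apply: open_continuous_measurable_fun; first exact: interval_open.
  move=> x; rewrite inE /= in_itv /= => /andP[cx xt].
  apply: hf_cont => //; apply/andP; split; [exact: lt_trans c0 cx|exact: xt].
move=> x; rewrite /= in_itv /= => /andP[cx xt].
rewrite lee_fin /hf.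
have xin : (x : R) \in `[c, tau] by rewrite in_itv /= (ltW cx) (ltW xt).
have := gmax _ xin.
move=> hg.
have Px : 0 < Pf a tau x.
  by apply: Pf_gt0 => //; apply/andP; split; [exact/ltW/(lt_trans c0 cx)|exact: xt].
have key (u w p : R) : 0 < p -> `|u| <= `|w| -> `|u / p| <= `| `|w| / p |.
  move=> p0 uw; rewrite !normrM !normfV (gtr0_norm p0) normr_id.
  by apply: ler_wpM2r; first by rewrite invr_ge0 ltW.
exact: key.
Qed.

Lemma tail_derive (R : realType) (k : R -> R) (tau t0 : R) :
  0 < t0 < tau ->
  (forall x, 0 < x < tau -> {for x, continuous k}) ->
  (forall c, 0 < c < tau -> (@lebesgue_measure R).-integrable `]c, tau[ (EFin \o k)) ->
  is_derive t0 1 (fun x => \int[@lebesgue_measure R]_(t in `]x, tau[) k t) (- k t0).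
Proof.
move=> /andP[t00 t0t] kc ki.
set c := t0 / 2; set u := (t0 + tau) / 2.
have c0 : 0 < c by rewrite divr_gt0.
have ct0 : c < t0 by rewrite /c; lra.
have t0u : t0 < u by rewrite /u; lra.
have ut : u < tau by rewrite /u; lra.
have kcu : {within `[c, u], continuous k}.
  apply: continuous_in_subspaceT => x; rewrite inE /= in_itv /= => /andP[cx xu].
  apply: kc; apply/andP; split; [exact: lt_le_trans cx|exact: le_lt_trans xu ut].
have iu := continuous_compact_integrable (@segment_compact _ c u) kcu.
have t0in : 0 < t0 < tau by apply/andP.
have [dF dFE] := continuous_FTC1_closed t0u iu ct0 (kc _ t0in).
set F := (fun x => \int[@lebesgue_measure R]_(t in `[c, x]) k t) in dF dFE.
have iF : is_derive t0 1 F (k t0).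
  by rewrite -dFE derive1E; exact: derivableP.
have kic : (@lebesgue_measure R).-integrable `]c, tau[ (EFin \o k).
  by apply: ki; apply/andP; split => //; exact: lt_trans ct0 t0t.
set C := \int[@lebesgue_measure R]_(t in `]c, tau[) k t.
have iG : is_derive t0 1 (cst C - F) (0 - k t0) by apply: is_deriveB.
rewrite sub0r in iG.
apply: near_eq_is_derive iG.
have : t0 \in `]c, tau[ by rewrite in_itv /= ct0 t0t.
move/near_in_itvoo; apply: filterS => x; rewrite in_itv /= => /andP[cx xt].
rewrite /= /C /F.
rewrite -(@Rintegral_itvB _ _ (BRight c) (BLeft tau) x) //=; rewrite ?bnd_simp ?ltW //.
congr (_ - _).
rewrite Rintegral_itv_obnd_cbnd //.
apply: (integrableS _ _ _ kic) => //.
by apply: subset_itvl; rewrite bnd_simp.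
Qed.

Definition If {R : realType} (a : R -> R) (tau x : R) : R :=
  \int[@lebesgue_measure R]_(t in `]x, tau[) hf a tau t.
Definition Gf {R : realType} (a : R -> R) (tau x : R) : R :=
  \int[@lebesgue_measure R]_(t in `]x, tau[) gf a t.

Lemma fpos_eq (R : realType) (a : R -> R) (tau : R) : regular_scale_factor a ->
  forall x, 0 < x < tau -> f_pos a tau x = Pf a tau x * If a tau x - Gf a tau x.
Proof.
move=> H x xin.
have hi := h_integrable H xin; have gi := g_integrable H xin.
rewrite /f_pos /If /Gf.
transitivity (\int[@lebesgue_measure R]_(t in `]x, tau[) (Pf a tau x * hf a tau t - gf a t)).
  by apply: eq_Rintegral => t _; rewrite /hf /gf /Pf; ring.
rewrite RintegralB //; last first.
  have -> : (EFin \o (fun t => Pf a tau x * hf a tau t)) =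
     (fun t => (Pf a tau x)%:E * (EFin \o hf a tau) t)%E by [].
  exact: integrableZl.
by rewrite RintegralZl.
Qed.

Lemma fpos_derive (R : realType) (a : R -> R) (tau : R) : regular_scale_factor a ->
  forall t0, 0 < t0 < tau ->
  is_derive t0 1 (f_pos a tau) (- (a t0 * derive1 a t0 / Pf a tau t0) * If a tau t0).
Proof.
move=> H t0 t0in.
have dI : is_derive t0 1 (If a tau) (- hf a tau t0).
  by apply: tail_derive => //; [exact: hf_cont|exact: h_integrable].
have dG : is_derive t0 1 (Gf a tau) (- gf a t0).
  apply: tail_derive => //; last exact: g_integrable.
  by move=> x /andP[x0 _]; exact: gf_cont.
have dP := Pf_derive H t0in.
have D := is_deriveB (is_deriveM dP dI) dG.
have P0 : 0 < Pf a tau t0.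
  by apply: Pf_gt0 => //; case/andP: t0in => t00 t0t; rewrite (ltW t00) t0t.
apply: (near_eq_is_derive _ (is_derive_eq D _)).
  have : t0 \in `]0, tau[ by rewrite in_itv /=.
  move/near_in_itvoo; apply: filterS => x; rewrite in_itv /= => xin.
  by rewrite /= fpos_eq.
have sc (u w : R) : u *: w = u * w by [].
rewrite !sc /hf; field.
by rewrite gt_eqF.
Qed.


Definition Phi {R : realType} (a : R -> R) (tau x : R) : R :=
  - (a x * derive1 a `|x| / Pf a tau x) * If a tau `|x|.

Lemma fsf_derive (R : realType) (a : R -> R) (tau : R) : regular_scale_factor a ->
  (forall t, a (- t) = a t) ->
  forall t0 : R, 0 < `|t0| < tau -> is_derive t0 1 (f_sf a tau) (Phi a tau t0).
Proof.
move=> H Hev t0 /andP[t0p t0t].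
have [t0pos|t0neg] := ltP 0 t0.
  rewrite gtr0_norm // in t0t.
  have t0in : 0 < t0 < tau by rewrite t0pos.
  have D := fpos_derive H t0in. apply: (near_eq_is_derive _ (is_derive_eq D _)); last first.
    by rewrite /Phi gtr0_norm.
  near=> x; rewrite /f_sf ifT //; apply: ltW.
  by near: x; exact: lt_nbhsr.
have t0n : t0 < 0 by rewrite lt_neqAle t0neg andbT; apply: contraTneq t0p => ->; rewrite normr0 ltxx.
rewrite ltr0_norm // in t0t t0p.
have t0in : 0 < - t0 < tau by rewrite t0p.
have D := fpos_derive H t0in.
have Dn : is_derive t0 1 (-%R : R -> R) (-1) by exact: is_deriveNid.
have Dc := @is_derive1_comp _ (f_pos a tau) (-%R) t0 _ _ D Dn.
have D2 := is_deriveB (is_derive_cst (2 * f_pos a tau 0) t0 1) Dc.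
apply: (near_eq_is_derive _ (is_derive_eq D2 _)); last first.
  rewrite /Phi ltr0_norm // Hev /Pf Hev; ring.
near=> x; rewrite /f_sf ifF //=.
apply/negbTE; rewrite -ltNge.
by near: x; exact: lt_nbhsl.
Unshelve. all: by end_near.
Qed.

Lemma a_norm (R : realType) (a : R -> R) : (forall t, a (- t) = a t) ->
  forall x, a x = a `|x|.
Proof.
move=> Hev x; have [x0|x0] := leP 0 x; first by rewrite ger0_norm.
by rewrite ltr0_norm // Hev.
Qed.

Lemma Phi_cont (R : realType) (a : R -> R) (tau : R) : regular_scale_factor a ->
  (forall t, a (- t) = a t) ->
  forall t0 : R, 0 < `|t0| < tau -> {for t0, continuous (Phi a tau)}.
Proof.
move=> H Hev t0 t0in.
pose Psi y := - vf a tau y * If a tau y.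
have -> : Phi a tau = Psi \o Num.norm.
  apply/funext => x; rewrite /Phi /Psi /vf /= /Pf.
  by rewrite -!(a_norm Hev).
apply: continuous_comp; first exact: norm_continuous.
apply: (@continuousM _ _ (fun y => - vf a tau y) (If a tau)).
  by apply: continuousN; exact: vf_cont.
have dI : is_derive `|t0| 1 (If a tau) (- hf a tau `|t0|).
  by apply: tail_derive => //; [exact: hf_cont|exact: h_integrable].
exact: is_derive_cont dI.
Qed.

Lemma near_norm_itv (R : realType) (tau t0 : R) : 0 < `|t0| < tau ->
  \forall x \near t0, 0 < `|x| < tau.
Proof.
move=> h.
have hn : `|t0| \in `]0, tau[ by rewrite in_itv /=.
have h2 : \forall y \near `|t0|, y \in `]0, tau[ := near_in_itvoo hn.
have h3 : \forall x \near t0, `|x| \in `]0, tau[ := (@norm_continuous _ R t0) _ h2.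
by apply: filterS h3 => x; rewrite in_itv /=.
Qed.

Unset Implicit Arguments. Set Strict Implicit.

Theorem lemma5p5 (R : realType) (a : R -> R) (tau : R) :
  regular_scale_factor a ->
  adot0_finite a ->
  (forall t, a (- t) = a t) ->
  0 < tau ->
  let D := [set t0 : R | - tau < t0 < tau /\ t0 != 0] in
  (forall t0, D t0 -> derivable (f_sf a tau) t0 1) /\
  (forall t0, D t0 -> {for t0, continuous (derive1 (f_sf a tau))}) /\
  (forall t0, D t0 ->
     derive1 (f_sf a tau) t0 =
       - (a t0 * derive1 a `|t0| / Num.sqrt (a tau ^+ 2 - a t0 ^+ 2)) *
         Rintegral (@lebesgue_measure R) `]`|t0|, tau[
           (fun t => derive1 (derive1 a) t / (derive1 a t) ^+ 2 / Num.sqrt (a tau ^+ 2 - a t ^+ 2))).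
Proof.
move=> H _ Hev tau0 D.
have Dn t0 : D t0 -> 0 < `|t0| < tau.
  by rewrite /D /= => -[h1 h2]; rewrite normr_gt0 h2 /= ltr_norml.
have dval t0 : 0 < `|t0| < tau -> derive1 (f_sf a tau) t0 = Phi a tau t0.
  by move=> h; rewrite derive1E; have [_ ->] := fsf_derive H Hev h.
split; [|split].
- by move=> t0 /Dn h; have [d _] := fsf_derive H Hev h.
- move=> t0 /Dn h.
  rewrite /prop_for /continuous_at (dval _ h).
  apply: cvg_trans (Phi_cont H Hev h).
  apply: near_eq_cvg.
  have := near_norm_itv h; apply: filterS => x hx.
  by rewrite dval.
- by move=> t0 /Dn h; rewrite dval.
Qed.
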